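(* Let $n,p\ge 1$, let $\boldsymbol{\beta}^{0}\in\mathbb{R}^{p}$, and let $\mathbf{x}_1,\dots,\mathbf{x}_n\in\mathbb{R}^p$ (true covariates), $\mathbf{u}_1,\dots,\mathbf{u}_n\in\mathbb{R}^p$ (measurement errors), $\mathbf{w}_i=\mathbf{x}_i+\mathbf{u}_i$ (measured covariates), and $y_1,\dots,y_n\in\mathbb{R}$ (responses). Let $\mathbf{W}=(\mathbf{w}_1,\dots,\mathbf{w}_n)^T$ and $\mathbf{U}=(\mathbf{u}_1,\dots,\mathbf{u}_n)^T$, with entries $w_{ij}$, $u_{ij}$, and assume the measurements are standardized: $\frac1n\sum_{i=1}^n w_{ij}=0$ and $\frac1n\sum_{i=1}^n w_{ij}^2=1$ for $j=1,\dots,p$. Let $\mu:\mathbb{R}\to\mathbb{R}$ be the GLM mean function, assumed infinitely differentiable with $r$th derivative $\mu^{(r)}$, and assume that for each $i$ its Taylor series around $\mathbf{w}_i^T\boldsymbol{\beta}^0$ converges to $\mu(\mathbf{x}_i^T\boldsymbol{\beta}^0)$, i.e. $$\mu(\mathbf{x}_i^T\boldsymbol{\beta}^0)=\sum_{r=0}^\infty \frac{\mu^{(r)}(\mathbf{w}_i^T\boldsymbol{\beta}^0)}{r!}\left(-\mathbf{u}_i^T\boldsymbol{\beta}^0\right)^r,\quad i=1,\dots,n.$$ Let $\epsilon_i=y_i-\mu(\mathbf{x}_i^T\boldsymbol{\beta}^0)$ and $\boldsymbol{\epsilon}=(\epsilon_1,\dots,\epsilon_n)^T$. Suppose $\lambda\ge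 0$ and $\delta\ge 0$ satisfy $$\frac1n\left\|\mathbf{W}^T\boldsymbol{\epsilon}\right\|_\infty\le\lambda\quad\text{and}\quad \|\mathbf{U}\|_\infty=\max_{i,j}|u_{ij}|\le\delta.$$ Then $\boldsymbol{\beta}^0\in\Theta$, where $$\Theta=\left\{\boldsymbol{\beta}\in\mathbb{R}^p:\ \frac1n\max_{1\le j\le p}\left|\sum_{i=1}^n w_{ij}\left\{y_i-\mu(\mathbf{w}_i^T\boldsymbol{\beta})\right\}\right|\le \lambda+\sum_{r=1}^\infty\frac{\delta^r}{r!\sqrt n}\|\boldsymbol{\beta}\|_1^r\left\|\boldsymbol{\mu}^{(r)}(\mathbf{W}\boldsymbol{\beta})\right\|_2\right\},$$ with $\boldsymbol{\mu}^{(r)}(\mathbf{W}\boldsymbol{\beta})=\left(\mu^{(r)}(\mathbf{w}_1^T\boldsymbol{\beta}),\dots,\mu^{(r)}(\mathbf{w}_n^T\boldsymbol{\beta})\right)^T$.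
   Context: This is the setting of a generalized linear model with canonical link: the response has density $\exp\{y\theta-b(\theta)+c(y,\phi)\}$ with linear predictor $\theta=\mathbf{x}^T\boldsymbol{\beta}^0$, and the mean function is $\mu(\theta)=b'(\theta)$ (e.g. $\mu(\theta)=(1+e^{-\theta})^{-1}$ for logistic regression, $\mu(\theta)=e^\theta$ for Poisson regression). The covariates are observed only through the additive measurement error model $\mathbf{w}_i=\mathbf{x}_i+\mathbf{u}_i$. Here $\|\cdot\|_\infty$ denotes the maximum absolute component (entry) norm of a vector or matrix, $\|\cdot\|_1$ and $\|\cdot\|_2$ the usual $\ell_1$ and $\ell_2$ vector norms. *)

(* Defs.v *)
From HB Require Import structures.
From mathcomp Require Import all_boot all_order all_algebra.
From mathcomp Require Import all_classical all_reals all_analysis.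
Set Implicit Arguments. Unset Strict Implicit. Unset Printing Implicit Defensive.
Import Order.TTheory GRing.Theory Num.Theory.
Import numFieldNormedType.Exports.
Local Open Scope ring_scope.

(* Vectors in R^p are functions 'I_p -> R; n x p matrices are 'I_n -> 'I_p -> R
   (row i is the i-th observation). *)
Definition dotp (R : realType) (p : nat) (a b : 'I_p -> R) : R :=
  \sum_(j < p) a j * b j.

Definition norm1 (R : realType) (p : nat) (b : 'I_p -> R) : R :=
  \sum_(j < p) `|b j|.

Definition norm2 (R : realType) (n : nat) (v : 'I_n -> R) : R :=
  Num.sqrt (\sum_(i < n) v i ^+ 2).

Definition norminf (R : realType) (p : nat) (v : 'I_p -> R) : R :=
  \big[Num.max/0]_(j < p) `|v j|.

Definition mnorminf (R : realType) (n p : nat) (A : 'I_n -> 'I_p -> R) : R :=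
  \big[Num.max/0]_(i < n) \big[Num.max/0]_(j < p) `|A i j|.

Definition trmulv (R : realType) (n p : nat) (A : 'I_n -> 'I_p -> R)
  (v : 'I_n -> R) : 'I_p -> R := fun j => \sum_(i < n) A i j * v i.

(* The set Theta; the infinite series of nonnegative terms is taken in the
   extended reals (it equals +oo when it diverges). *)
Definition Theta (R : realType) (n p : nat) (mu : R -> R)
  (W : 'I_n -> 'I_p -> R) (y : 'I_n -> R) (lambda delta : R) :
  set ('I_p -> R) :=
  [set b | (((n%:R)^-1 *
             norminf (trmulv W (fun i => y i - mu (dotp (W i) b))))%:E
           <= (lambda%:E +
               \sum_(1 <= r <oo)
                 ((delta ^+ r / ((r`!)%:R * Num.sqrt (n%:R))) *
                  norm1 b ^+ r *
                  norm2 (fun i => (derive1n r mu) (dotp (W i) b)))%:E))%E].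

(* Main.v *)
Require Import Defs.
From HB Require Import structures.
From mathcomp Require Import all_boot all_order all_algebra.
From mathcomp Require Import all_classical all_reals all_analysis.
From mathcomp Require Import ring lra.
Import Order.TTheory GRing.Theory Num.Theory.
Import numFieldNormedType.Exports.
Local Open Scope classical_set_scope.
Local Open Scope ring_scope.

Lemma cs_le (R : realType) (n : nat) (a b : 'I_n -> R) :
  \sum_(i < n) `|a i| * `|b i| <=
  Num.sqrt (\sum_(i < n) a i ^+ 2) * Num.sqrt (\sum_(i < n) b i ^+ 2).
Proof.
set A := \sum_(i < n) a i ^+ 2; set B := \sum_(i < n) b i ^+ 2.
have A0 : 0 <= A by apply: sumr_ge0 => i _; exact: sqr_ge0.
have B0 : 0 <= B by apply: sumr_ge0 => i _; exact: sqr_ge0.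
have [A00|Apos] := eqVneq A 0.
  have a0 : forall i, a i = 0.
    move=> i; apply/eqP; rewrite -sqrf_eq0; apply/eqP.
    by move: A00; rewrite /A => A00; apply: (psumr_eq0P _ A00) => // k _; exact: sqr_ge0.
  rewrite big1 ?mulr_ge0 ?sqrtr_ge0 // => i _; by rewrite a0 normr0 mul0r.
have [B00|Bpos] := eqVneq B 0.
  have b0 : forall i, b i = 0.
    move=> i; apply/eqP; rewrite -sqrf_eq0; apply/eqP.
    by move: B00; rewrite /B => B00; apply: (psumr_eq0P _ B00) => // k _; exact: sqr_ge0.
  rewrite big1 ?mulr_ge0 ?sqrtr_ge0 // => i _; by rewrite b0 normr0 mulr0.
set sA := Num.sqrt A; set sB := Num.sqrt B.
have sAp : 0 < sA by rewrite sqrtr_gt0 lt_def Apos A0.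
have sBp : 0 < sB by rewrite sqrtr_gt0 lt_def Bpos B0.
have eA : A = sA ^+ 2 by rewrite sqr_sqrtr.
have eB : B = sB ^+ 2 by rewrite sqr_sqrtr.
have key : (2 * sA * sB) * \sum_(i < n) `|a i| * `|b i| <= 2 * (sA * sB) * (sA * sB).
  have -> : 2 * (sA * sB) * (sA * sB) = \sum_(i < n) (a i ^+ 2 * sB ^+ 2 + b i ^+ 2 * sA ^+ 2).
    rewrite big_split /= -!mulr_suml -/A -/B eA eB; ring.
  rewrite mulr_sumr; apply: ler_sum => i _.
  have h1 : a i ^+ 2 = `|a i| ^+ 2 by rewrite real_normK ?num_real.
  have h2 : b i ^+ 2 = `|b i| ^+ 2 by rewrite real_normK ?num_real.
  rewrite h1 h2.
  have := sqr_ge0 (`|a i| * sB - `|b i| * sA).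
  nra.
have p : 0 < 2 * sA * sB by rewrite !mulr_gt0.
rewrite -(ler_pM2l p); apply: (le_trans key); rewrite le_eqVlt; apply/orP; left; apply/eqP; ring.
Qed.

Lemma Uentry (R : realType) (n p : nat) (U : 'I_n -> 'I_p -> R) i j :
  `|U i j| <= mnorminf U.
Proof.
rewrite /mnorminf.
apply: (le_trans _ (le_bigmax _ (fun i => \big[Num.max/0]_(j < p) `|U i j|) i)).
exact: (le_bigmax _ (fun j => `|U i j|) j).
Qed.

Lemma dot_bound (R : realType) (p : nat) (u b : 'I_p -> R) (d : R) :
  (forall j, `|u j| <= d) -> `|dotp u b| <= d * norm1 b.
Proof.
move=> hu; rewrite /dotp /norm1 mulr_sumr.
apply: (le_trans (ler_norm_sum _ _ _)); apply: ler_sum => j _.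
rewrite normrM; apply: ler_wpM2r => //.
Qed.

Lemma cvg_sumI (R : realType) (n : nat) (f : 'I_n -> nat -> R) (l : 'I_n -> R) :
  (forall i, f i N @[N --> \oo] --> l i) ->
  \sum_(i < n) f i N @[N --> \oo] --> \sum_(i < n) l i.
Proof.
move=> h; apply: cvg_big => //.
exact: add_continuous.
Qed.

Theorem proposition1 (R : realType) (n p : nat)
  (beta0 : 'I_p -> R) (X U W : 'I_n -> 'I_p -> R) (y : 'I_n -> R)
  (mu : R -> R) (lambda delta : R) :
  (0 < n)%N -> (0 < p)%N ->
  (forall i j, W i j = X i j + U i j) ->
  (forall j, (n%:R)^-1 * \sum_(i < n) W i j = 0) ->
  (forall j, (n%:R)^-1 * \sum_(i < n) W i j ^+ 2 = 1) ->
  (forall (r : nat) (t : R), derivable (derive1n r mu) t 1) ->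
  (forall i : 'I_n,
     series (fun r : nat => (derive1n r mu) (dotp (W i) beta0) / (r`!)%:R *
                            (- dotp (U i) beta0) ^+ r)
       @ \oo --> mu (dotp (X i) beta0)) ->
  0 <= lambda -> 0 <= delta ->
  (n%:R)^-1 * norminf (trmulv W (fun i => y i - mu (dotp (X i) beta0)))
    <= lambda ->
  mnorminf U <= delta ->
  Theta mu W y lambda delta beta0.
Proof.
move=> n0 p0 hW _ hW2 _ hser lam0 del0 hlam hU.
set a := fun i => dotp (W i) beta0.
set c := fun i r => (derive1n r mu) (a i) / (r`!)%:R * (- dotp (U i) beta0) ^+ r.
set T := fun r : nat => (delta ^+ r / ((r`!)%:R * Num.sqrt (n%:R))) *
                  norm1 beta0 ^+ r *
                  norm2 (fun i => (derive1n r mu) (dotp (W i) beta0)).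
have nR : (0 : R) < n%:R by rewrite ltr0n.
have sqn : 0 < Num.sqrt (n%:R : R) by rewrite sqrtr_gt0.
have T0 : forall r, 0 <= T r.
  move=> r; rewrite /T; apply: mulr_ge0; last exact: sqrtr_ge0.
  apply: mulr_ge0; last by rewrite exprn_ge0 // /norm1 sumr_ge0.
  by rewrite divr_ge0 ?exprn_ge0 // mulr_ge0 ?sqrtr_ge0.
rewrite /Theta /=.
case hS: (\sum_(1 <= r <oo) (T r)%:E)%E => [s| |].
- have hps : forall N, \sum_(1 <= r < N) T r <= s.
    move=> N; have := @nneseries_lim_ge R (fun r => (T r)%:E) xpredT 1%N N.
    rewrite hS => h; rewrite -lee_fin -sumEFin; apply: h => r _ _; rewrite lee_fin; exact: T0.
  have s0 : 0 <= s by have := hps 0%N; rewrite big_geq.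
  have hr : forall j r, `|\sum_(i < n) W i j * c i r| <= n%:R * T r.
    move=> j r.
    have f0 : 0 < (r`!)%:R :> R by rewrite ltr0n fact_gt0.
    have b0 : 0 <= norm1 beta0 by rewrite /norm1 sumr_ge0.
    set K := (delta * norm1 beta0) ^+ r / (r`!)%:R.
    have K0 : 0 <= K by rewrite divr_ge0 ?exprn_ge0 ?mulr_ge0 // ltW.
    set m := fun i => derive1n r mu (a i).
    have hc : forall i, `|c i r| <= K * `|m i|.
      move=> i; rewrite /c /K /m normrM normrM normfV normrX normrN.
      have hd := @dot_bound R p (U i) beta0 delta (fun j => le_trans (@Uentry R n p U i j) hU).
      have hX : `|dotp (U i) beta0| ^+ r <= (delta * norm1 beta0) ^+ r.
        by apply: lerXn2r => //; rewrite nnegrE ?mulr_ge0.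
      rewrite (ger0_norm (ltW f0)).
      rewrite [X in _ <= X]mulrC -mulrA [X in _ <= _ * X]mulrC.
      by apply: ler_wpM2l => //; apply: ler_wpM2l => //.
    apply: (le_trans (ler_norm_sum _ _ _)).
    apply: (@le_trans _ _ (\sum_(i < n) `|W i j| * (K * `|m i|))).
      by apply: ler_sum => i _; rewrite normrM; apply: ler_wpM2l => //; exact: hc.
    have -> : \sum_(i < n) `|W i j| * (K * `|m i|) = K * \sum_(i < n) `|W i j| * `|m i|.
      by rewrite mulr_sumr; apply: eq_bigr => i _; ring.
    apply: (@le_trans _ _ (K * (Num.sqrt (\sum_(i < n) W i j ^+ 2) * Num.sqrt (\sum_(i < n) m i ^+ 2)))).
      apply: ler_wpM2l => //; exact (@cs_le R n (fun i => W i j) m).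
    have hWn : \sum_(i < n) W i j ^+ 2 = n%:R.
      have := hW2 j => /(congr1 (fun x => n%:R * x)).
      by rewrite mulrA mulfV ?mul1r ?mulr1 // gt_eqF.
    rewrite hWn /T /K.
    set q := Num.sqrt (n%:R : R).
    have hn : (n%:R : R) = q ^+ 2 by rewrite sqr_sqrtr // ler0n.
    rewrite hn exprMn /norm2 -/m.
    rewrite le_eqVlt; apply/orP; left; apply/eqP.
    field.
    by rewrite gt_eqF // gt_eqF.
  have hd : forall j, `|\sum_(i < n) W i j * (mu (dotp (X i) beta0) - mu (a i))| <= n%:R * s.
    move=> j.
    have hc : (fun N => `|\sum_(i < n) W i j * (series (c i) N - mu (a i))|) @ \oo
       --> `|\sum_(i < n) W i j * (mu (dotp (X i) beta0) - mu (a i))|.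
      apply: cvg_norm; apply: cvg_sumI => i; apply: cvgMl_tmp.
      apply: cvgB; [exact: hser | exact: cvg_cst].
    apply: (cvgr_to_le hc).
    near=> N.
    have N1 : (0 < N)%N by near: N; exists 1%N.
    have eser : forall i, series (c i) N - mu (a i) = \sum_(1 <= r < N) c i r.
      move=> i; rewrite /series /= big_ltn //= /c /= expr0 mulr1 fact0 divr1.
      by rewrite addrAC subrr add0r.
    under eq_bigr do rewrite eser.
    rewrite (eq_bigr (fun i => \sum_(1 <= r < N) W i j * c i r)); last first.
      by move=> i _; rewrite mulr_sumr.
    rewrite exchange_big /=.
    apply: (le_trans (ler_norm_sum _ _ _)).
    apply: (le_trans (ler_sum _ (fun r _ => hr j r))).
    by rewrite -mulr_sumr ler_wpM2l ?ler0n ?hps.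
  rewrite -EFinD lee_fin.
  have hl : norminf (trmulv W (fun i => y i - mu (dotp (X i) beta0))) <= n%:R * lambda.
    have := ler_wpM2l (ler0n _ n) hlam; rewrite mulrA mulfV ?mul1r //.
    by rewrite gt_eqF.
  rewrite -[X in _ <= X](mulKf (lt0r_neq0 nR)); apply: ler_wpM2l.
    by rewrite invr_ge0 ler0n.
  rewrite /norminf; apply: bigmax_le => [|j _].
    by rewrite mulr_ge0 ?ler0n ?addr_ge0.
  rewrite /trmulv.
  have -> : \sum_(i < n) W i j * (y i - mu (dotp (W i) beta0)) =
     \sum_(i < n) W i j * (y i - mu (dotp (X i) beta0)) +
     \sum_(i < n) W i j * (mu (dotp (X i) beta0) - mu (a i)).
    by rewrite -big_split; apply: eq_bigr => i _ /=; rewrite /a; ring.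
  rewrite mulrDr; apply: (le_trans (ler_normD _ _)); apply: lerD; last exact: hd.
  apply: le_trans hl.
  exact: (le_bigmax _ (fun j => `|trmulv W (fun i => y i - mu (dotp (X i) beta0)) j|) j).
- by rewrite addey // leey.
- exfalso; have : (0 <= \sum_(1 <= r <oo) (T r)%:E)%E by apply: nneseries_ge0 => r _ _; rewrite lee_fin.
  by rewrite hS.
Unshelve. all: by end_near.
Qed.
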